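(* Let $n\ge 3$ and $u,v,w>0$. Let $A\in\mathbb{R}^{n\times n}$ be the Toeplitz matrix with $A_{ii}=w$ for all $i$, $A_{i,i+1}=u$ and $A_{i+1,i}=v$ for $i=1,\dots,n-1$, $A_{1n}=u$, $A_{n1}=v$, and all other entries $0$; that is, $$A=\begin{pmatrix} w & u & 0 & \cdots & 0 & u\\ v & w & u & \cdots & 0 & 0\\ 0 & v & w & \ddots & & \vdots\\ \vdots & & \ddots & \ddots & \ddots & 0\\ 0 & & & v & w & u\\ v & 0 & \cdots & 0 & v & w\end{pmatrix}.$$ Then $r(t):=r\big((1-t)A+tA^{\top}\big)$ is concave in $t$ for $t\in(0,1)$, strictly concave if $u\ne v$.
   Context: $r(M)$ denotes the spectral radius of a square matrix $M$. *)

(* Defs.v *)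
From HB Require Import structures.
From mathcomp Require Import all_boot all_order all_algebra.
From mathcomp Require Import complex.
From mathcomp Require Import boolp classical_sets reals.
Set Implicit Arguments. Unset Strict Implicit. Unset Printing Implicit Defensive.
Import Order.TTheory GRing.Theory Num.Theory.
Local Open Scope ring_scope.
Local Open Scope classical_set_scope.

Definition cmod (R : rcfType) (z : R[i]) : R :=
  let: Complex a b := z in Num.sqrt (a ^+ 2 + b ^+ 2).

Definition ceig (R : rcfType) (n : nat) (M : 'M[R]_n) : set R[i] :=
  [set z | root (char_poly (map_mx (fun x : R => (x%:C)%C) M)) z].

Definition spectral_radius (R : realType) (n : nat) (M : 'M[R]_n) : R :=
  sup [set cmod z | z in ceig M].

(* The Toeplitz matrix of the statement (0-based indices):
   diagonal w, superdiagonal u, subdiagonal v, A_{1n} = u, A_{n1} = v. *)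
Definition toepA (R : pzRingType) (n : nat) (u v w : R) : 'M[R]_n :=
  \matrix_(i < n, j < n)
    if i == j :> nat then w
    else if (j == i.+1 :> nat) || ((i == 0%N :> nat) && (j == n.-1 :> nat)) then u
    else if (i == j.+1 :> nat) || ((j == 0%N :> nat) && (i == n.-1 :> nat)) then v
    else 0.

Definition concave_on01 (R : realType) (f : R -> R) : Prop :=
  forall x y s : R, 0 < x < 1 -> 0 < y < 1 -> 0 <= s <= 1 ->
    (1 - s) * f x + s * f y <= f ((1 - s) * x + s * y).

Definition strictly_concave_on01 (R : realType) (f : R -> R) : Prop :=
  forall x y s : R, 0 < x < 1 -> 0 < y < 1 -> x != y -> 0 < s < 1 ->
    (1 - s) * f x + s * f y < f ((1 - s) * x + s * y).

(* Main.v *)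
Require Import Defs.
From HB Require Import structures.
From mathcomp Require Import all_boot all_order all_algebra.
From mathcomp Require Import complex polyrcf.
From mathcomp Require Import boolp classical_sets reals.
From mathcomp Require Import ring lra zify.
Import Order.TTheory GRing.Theory Num.Theory.
Local Open Scope ring_scope.
Local Open Scope classical_set_scope.

Section S.
Variable R : realType.

Lemma cmodE (z : R[i]) : cmod z = Normc.normc z. Proof. by case: z. Qed.

Lemma normc_real (c : R) : 0 <= c -> Normc.normc (c%:C)%C = c.
Proof. by move=> c0; rewrite /= expr0n addr0 sqrtr_sqr ger0_norm. Qed.

Lemma normc_sum n (F : 'I_n -> R[i]) :
  Normc.normc (\sum_i F i) <= \sum_i Normc.normc (F i).
Proof.
elim/big_rec2: _ => [|i y1 y2 _ h]; first by rewrite (Normc.normc0 R).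
by apply: le_trans (le_normcD _ _) _; rewrite lerD2l.
Qed.

Lemma perron_bound n (M : 'M[R]_n) (p : 'rV[R]_n) lam :
  (forall i j, 0 <= M i j) -> (forall j, 0 < p 0 j) -> p *m M = lam *: p ->
  forall mu : R[i], root (char_poly (map_mx (fun x : R => (x%:C)%C) M)) mu -> cmod mu <= lam.
Proof.
move=> M0 p0 pM mu; rewrite -eigenvalue_root_char => /eigenvalueP [x xM x0].
have [j0 xj0] : exists j0, x 0 j0 != 0.
  case: (pickP (fun j => x 0 j != 0)) => [j0 h|h]; first by exists j0.
  case/eqP: x0; apply/matrixP => i j; rewrite ord1 !mxE; apply/eqP.
  by move: (h j) => /= /negbFE.
set f := fun j => Normc.normc (x 0 j) / p 0 j.
case: (@arg_maxP _ _ _ j0 xpredT f isT) => j _ jmax.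
set K := f j.
have nz : forall z : R[i], z != 0 -> 0 < Normc.normc z.
  move=> z z0; rewrite lt_def; apply/andP; split.
    by apply/eqP => /(@Normc.eq0_normc R) /eqP; rewrite (negbTE z0).
  by case: z {z0} => a b /=; rewrite sqrtr_ge0.
have Kp : 0 < K.
  apply: lt_le_trans (jmax j0 isT); rewrite /f divr_gt0 //; exact: nz.
have xjE : Normc.normc (x 0 j) = K * p 0 j by rewrite /K /f divfK // gt_eqF.
have xiE : forall i, Normc.normc (x 0 i) <= K * p 0 i.
  by move=> i; rewrite -ler_pdivrMr //; exact: (jmax i isT).
have /matrixP/(_ 0 j) e := xM; rewrite !mxE in e.
have h1 : Normc.normc mu * (K * p 0 j) <= K * (lam * p 0 j).
  rewrite -xjE -Normc.normcM -e.
  apply: le_trans; first exact: normc_sum.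
  have /matrixP/(_ 0 j) := pM; rewrite !mxE => <-.
  rewrite mulr_sumr; apply: ler_sum => i _.
  rewrite mxE Normc.normcM normc_real // mulrA; apply: ler_wpM2r => //.
have h2 : Normc.normc mu * (K * p 0 j) <= lam * (K * p 0 j).
  by have -> : lam * (K * p 0 j) = K * (lam * p 0 j) by ring.
by rewrite cmodE -(ler_pM2r (mulr_gt0 Kp (p0 j))).
Qed.

Lemma perron_root n (M : 'M[R]_n) (p : 'rV[R]_n) lam :
  (0 < n)%N -> (forall j, 0 < p 0 j) -> p *m M = lam *: p ->
  root (char_poly (map_mx (fun x : R => (x%:C)%C) M)) (lam%:C)%C.
Proof.
move=> n0 p0 pM; rewrite -eigenvalue_root_char; apply/eigenvalueP.
exists (map_mx (real_complex R) p).
  have -> : map_mx (fun x : R => (x%:C)%C) M = map_mx (real_complex R) M by [].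
  rewrite -map_mxM pM; apply/matrixP => i j; rewrite !mxE.
  by rewrite rmorphM.
apply/eqP => /matrixP /(_ 0 (Ordinal n0)); rewrite !mxE => -[] h.
by move: (p0 (Ordinal n0)); rewrite h ltxx.
Qed.

Lemma sr_eq n (M : 'M[R]_n) (p : 'rV[R]_n) lam :
  (0 < n)%N -> (forall i j, 0 <= M i j) -> (forall j, 0 < p 0 j) ->
  p *m M = lam *: p -> 0 <= lam -> spectral_radius M = lam.
Proof.
move=> n0 M0 p0 pM l0; rewrite /spectral_radius.
have inS : [set cmod z | z in ceig M] lam.
  exists (lam%:C)%C; first exact: perron_root pM.
  by rewrite cmodE normc_real.
have ub : ubound [set cmod z | z in ceig M] lam.
  by move=> r [z zr <-]; exact: perron_bound pM _ zr.
apply/eqP; rewrite eq_le; apply/andP; split.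
  by apply: ge_sup => //; exists lam.
apply: sup_upper_bound => //; split; first by exists lam.
by exists lam.
Qed.
Definition D (m : nat) (x y : R) := m%:R * y ^+ m.+1 + x ^+ m.+1 - m.+1%:R * x * y ^+ m.

Lemma D_rec m x y : D m.+1 x y = x * D m x y + m.+1%:R * y ^+ m * (x - y) ^+ 2.
Proof. rewrite /D !exprS -[in LHS](addn1 m.+1) -[in LHS](addn1 m) !natrD; ring. Qed.

Lemma D_ge0 m x y : 0 <= x -> 0 <= y -> 0 <= D m x y.
Proof.
move=> x0 y0; elim: m => [|m IH]; first by rewrite /D !expr1 expr0 mul0r add0r mulr1 mul1r subrr.
rewrite D_rec; apply: addr_ge0; first exact: mulr_ge0.
by apply: mulr_ge0; [apply: mulr_ge0; [exact: ler0n| exact: exprn_ge0]| exact: sqr_ge0].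
Qed.

Lemma D_gt0 m x y : 0 <= x -> 0 < y -> x != y -> 0 < D m.+1 x y.
Proof.
move=> x0 y0 xy; rewrite D_rec; apply: ltr_wpDl; first by apply: mulr_ge0 => //; exact: D_ge0 (ltW y0).
apply: mulr_gt0; first by apply: mulr_gt0; [exact: ltr0Sn | exact: exprn_gt0].
by rewrite exprn_even_gt0 //= subr_eq0.
Qed.

Lemma nroot_ex (n : nat) (c : R) : (0 < n)%N -> 0 < c -> exists2 z : R, 0 < z & z ^+ n = c.
Proof.
move=> n0 c0.
have h : 0 <= 1 + c by lra.
have hp : ('X^n - c%:P).[0] <= 0 <= ('X^n - c%:P).[1 + c].
  rewrite !hornerE expr0n eqn0Ngt n0 /= sub0r oppr_le0 (ltW c0) /=.
  rewrite subr_ge0; apply: le_trans (ler_eXnr _ _) => //; lra.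
have [x /andP[x0 _]] := poly_ivt h hp.
rewrite /root !hornerE subr_eq0 => /eqP xc.
exists x => //.
rewrite lt_def x0 andbT; apply/eqP => x00.
by move: xc; rewrite x00 expr0n eqn0Ngt n0 /= => c00; move: c0; rewrite -c00 ltxx.
Qed.

Definition Phi (m : nat) (a b y : R) :=
  m%:R * b * y + a / y ^+ m + m%:R * a / y + b * y ^+ m.

Lemma Phi_id m a b y z : 0 < y -> b * z ^+ m.+1 = a ->
  Phi m a b y - m.+1%:R * b * (z + z ^+ m) = b * (D m z y / y ^+ m + D m y z / y).
Proof.
move=> y0 <-; rewrite /Phi /D.
have y1 : y != 0 by rewrite gt_eqF.
have ym : y ^+ m != 0 by rewrite expf_neq0.
rewrite !exprS -(addn1 m) natrD; field.
by rewrite ym y1.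
Qed.

Lemma Phi_ge m a b y z : 0 < y -> 0 < z -> 0 < b -> b * z ^+ m.+1 = a ->
  m.+1%:R * b * (z + z ^+ m) <= Phi m a b y.
Proof.
move=> y0 z0 b0 e; rewrite -subr_ge0 Phi_id //.
apply: mulr_ge0; first exact: ltW.
apply: addr_ge0; apply: divr_ge0; try apply: D_ge0; try exact: ltW.
exact: exprn_ge0 (ltW y0).
Qed.

Lemma Phi_gt m a b y z : 0 < y -> 0 < z -> 0 < b -> b * z ^+ m.+2 = a -> y != z ->
  m.+2%:R * b * (z + z ^+ m.+1) < Phi m.+1 a b y.
Proof.
move=> y0 z0 b0 e yz; rewrite -subr_gt0 Phi_id //.
apply: mulr_gt0 => //.
apply: ltr_wpDr; first by apply: divr_ge0; [apply: D_ge0; exact: ltW| exact: ltW].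
apply: divr_gt0; last exact: exprn_gt0.
by apply: D_gt0 => //; [exact: ltW| rewrite eq_sym].
Qed.

Lemma Phi_eq m a b z : 0 < z -> b * z ^+ m.+1 = a ->
  Phi m a b z = m.+1%:R * b * (z + z ^+ m).
Proof.
move=> z0 e; apply/eqP; rewrite -subr_eq0 Phi_id //.
have -> : D m z z = 0 by rewrite /D exprS -(addn1 m) natrD; ring.
by rewrite !mul0r addr0 mulr0.
Qed.

Lemma Phi_lin m a1 b1 a2 b2 y s :
  Phi m ((1 - s) * a1 + s * a2) ((1 - s) * b1 + s * b2) y =
  (1 - s) * Phi m a1 b1 y + s * Phi m a2 b2 y.
Proof. rewrite /Phi; ring. Qed.
Definition upb (n i j : nat) := ((j == i.+1) || ((i == 0) && (j == n.-1)))%N.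
Definition dnb (n i j : nat) := ((i == j.+1) || ((j == 0) && (i == n.-1)))%N.

Lemma Mentry n (u v w t : R) (i j : 'I_n) : (3 <= n)%N ->
  ((1 - t) *: toepA n u v w + t *: (toepA n u v w)^T) i j =
  w * (i == j :> nat)%:R + ((1 - t) * u + t * v) * (upb n i j)%:R
    + ((1 - t) * v + t * u) * (dnb n i j)%:R.
Proof.
move=> n3; rewrite !mxE /upb /dnb.
have := ltn_ord i; have := ltn_ord j.
move: (nat_of_ord i) (nat_of_ord j) => a b ha hb.
case: (boolP (a == b)) => [/eqP <-|ab].
  rewrite eqxx /=.
  have -> : (a == a.+1)%N = false by lia.
  have -> : ((a == 0) && (a == n.-1))%N = false by lia.
  rewrite /=; ring.
have ba : (b == a)%N = false by lia.
rewrite ba.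
case: (boolP ((b == a.+1) || ((a == 0) && (b == n.-1)))%N) => h1.
  have -> : ((a == b.+1) || ((b == 0) && (a == n.-1)))%N = false by lia.
  rewrite /=; ring.
case: (boolP ((a == b.+1) || ((b == 0) && (a == n.-1)))%N) => h2 /=; ring.
Qed.

Lemma sum_ind n (F : nat -> R) (P : nat -> bool) :
  \sum_(i < n) F i * (P i)%:R = \sum_(i < n | P i) F i.
Proof. by rewrite [RHS]big_mkcond; apply: eq_bigr => i _; case: (P i); rewrite ?mulr1 ?mulr0. Qed.

Lemma sum_pred1 n (F : nat -> R) (P : nat -> bool) k : (k < n)%N ->
  (forall i, (i < n)%N -> P i = (i == k)) -> \sum_(i < n | P i) F i = F k.
Proof.
move=> kn H; rewrite (bigD1 (Ordinal kn)) /=; last by rewrite H.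
rewrite big1 ?addr0 // => i /andP[Pi ne]; exfalso.
move: Pi; rewrite H // => /eqP ik; case/eqP: ne; exact: val_inj.
Qed.

Lemma sum_pred2 n (F : nat -> R) (P : nat -> bool) k1 k2 : (k1 < n)%N -> (k2 < n)%N ->
  k1 != k2 ->
  (forall i, (i < n)%N -> P i = (i == k1) || (i == k2)) -> \sum_(i < n | P i) F i = F k1 + F k2.
Proof.
move=> k1n k2n k12 H; rewrite (bigD1 (Ordinal k1n)) /=; last by rewrite H // eqxx.
rewrite (bigD1 (Ordinal k2n)) /=; last first.
  by rewrite H // eqxx orbT andTb; apply/eqP => -[] e; move: k12; rewrite e eqxx.
rewrite big1 ?addr0 // => i /andP[/andP [Pi ne1] ne2]; exfalso.
move: Pi; rewrite H // => /orP[] /eqP ik.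
  by case/eqP: ne1; exact: val_inj.
by case/eqP: ne2; exact: val_inj.
Qed.

Lemma sum_pred0 n (F : nat -> R) (P : nat -> bool) :
  (forall i, (i < n)%N -> ~~ P i) -> \sum_(i < n | P i) F i = 0.
Proof. by move=> H; rewrite big_mkcond big1 // => i _; rewrite (negbTE (H i (ltn_ord i))). Qed.


Lemma eigvec k (u v w t z : R) :
  ((1 - t) * v + t * u) * z ^+ k.+3 = (1 - t) * u + t * v ->
  (\row_(i < k.+3) z ^+ i) *m ((1 - t) *: toepA k.+3 u v w + t *: (toepA k.+3 u v w)^T)
  = (w + ((1 - t) * v + t * u) * (z + z ^+ k.+2)) *: \row_(i < k.+3) z ^+ i.
Proof.
set a := (1 - t) * u + t * v; set b := (1 - t) * v + t * u => e.
apply/rowP => j; rewrite !mxE.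
under eq_bigr => i _ do rewrite Mentry // mxE.
have -> : forall (F : 'I_k.+3 -> R) (G H J : 'I_k.+3 -> R),
   \sum_i F i * (w * G i + a * H i + b * J i) =
   w * \sum_i F i * G i + a * \sum_i F i * H i + b * \sum_i F i * J i.
  move=> F G H J; rewrite !mulr_sumr -!big_split /=; apply: eq_bigr => i _; ring.
rewrite (@sum_ind k.+3 (fun i => z ^+ i) (fun i => i == j :> nat)).
rewrite (@sum_ind k.+3 (fun i => z ^+ i) (fun i => upb k.+3 i j)).
rewrite (@sum_ind k.+3 (fun i => z ^+ i) (fun i => dnb k.+3 i j)).
rewrite (@sum_pred1 _ (fun i => z ^+ i) (fun i => i == j :> nat) j) //.
case: j => [[|l] jn] /=.
  rewrite (@sum_pred0 _ (fun i => z ^+ i) (fun i => upb k.+3 i 0)); try (move=> i _; rewrite /upb; lia).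
  rewrite (@sum_pred2 _ (fun i => z ^+ i) (fun i => dnb k.+3 i 0) 1 k.+2) //; try (move=> i _; rewrite /dnb; lia).
  rewrite expr0; ring.
case: (boolP (l == k.+1)%N) => [/eqP lk|lk].
  subst l.
  rewrite (@sum_pred2 _ (fun i => z ^+ i) (fun i => upb k.+3 i k.+2) k.+1 0) //; try (move=> i _; rewrite /upb; lia).
  rewrite (@sum_pred0 _ (fun i => z ^+ i) (fun i => dnb k.+3 i k.+2)); last first.
  move=> i hi; rewrite /dnb. lia.
  rewrite -e !exprS; ring.
rewrite (@sum_pred1 _ (fun i => z ^+ i) (fun i => upb k.+3 i l.+1) l); try (move=> i _; rewrite /upb; lia); try lia.
rewrite (@sum_pred1 _ (fun i => z ^+ i) (fun i => dnb k.+3 i l.+1) l.+2); try (move=> i _; rewrite /dnb; lia); try lia.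
rewrite -e.
rewrite !exprS; ring.
Qed.
End S.
Local Close Scope classical_set_scope.

Theorem theorem4 (R : realType) (n : nat) (u v w : R) :
  (3 <= n)%N -> 0 < u -> 0 < v -> 0 < w ->
  let A : 'M[R]_n := toepA n u v w in
  let r := fun t : R => spectral_radius ((1 - t) *: A + t *: A^T) in
  concave_on01 r /\ (u != v -> strictly_concave_on01 r).
Proof.
case: n => [|[|[|k]]] n3 //; move=> u0 v0 w0 A r.
have apos : forall t, 0 < t < 1 -> 0 < (1 - t) * u + t * v.
  by move=> t /andP[? ?]; nra.
have bpos : forall t, 0 < t < 1 -> 0 < (1 - t) * v + t * u.
  by move=> t /andP[? ?]; nra.
have rE : forall t z, 0 < t < 1 -> 0 < z ->
    ((1 - t) * v + t * u) * z ^+ k.+3 = (1 - t) * u + t * v ->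
    r t = w + ((1 - t) * v + t * u) * (z + z ^+ k.+2).
  move=> t z ht z0 e; rewrite /r /A.
  have a0 := apos t ht; have b0 := bpos t ht.
  apply: (@sr_eq _ _ _ (\row_(i < k.+3) z ^+ i)) => //.
  - move=> i j; rewrite Mentry //.
    by apply: addr_ge0; [apply: addr_ge0|]; apply: mulr_ge0 => //; apply: ltW.
  - by move=> j; rewrite mxE exprn_gt0.
  - exact: eigvec.
  - apply: addr_ge0; first exact: ltW.
    by apply: mulr_ge0; [exact: ltW| apply: addr_ge0; [exact: ltW| exact: exprn_ge0 (ltW z0)]].
have zex : forall t, 0 < t < 1 -> exists2 z, 0 < z &
    ((1 - t) * v + t * u) * z ^+ k.+3 = (1 - t) * u + t * v.
  move=> t ht.
  have [z z0 hz] := @nroot_ex R k.+3 (((1 - t) * u + t * v) / ((1 - t) * v + t * u)) isT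
      (divr_gt0 (apos t ht) (bpos t ht)).
  by exists z => //; rewrite hz mulrC divfK // gt_eqF // bpos.
have tin : forall x y s : R, 0 < x < 1 -> 0 < y < 1 -> 0 <= s <= 1 -> 0 < (1 - s) * x + s * y < 1.
  move=> x y s /andP[? ?] /andP[? ?] /andP[? ?]; apply/andP; split; case: (lerP x y) => ?; nra.
have core : forall x y s : R, 0 < x < 1 -> 0 < y < 1 -> 0 <= s <= 1 ->
   exists zx zy zt P1 P2 : R,
   [/\ r x = w + ((1 - x) * v + x * u) * (zx + zx ^+ k.+2),
       r y = w + ((1 - y) * v + y * u) * (zy + zy ^+ k.+2),
       r ((1 - s) * x + s * y) = w + (1 - s) * (P1 / k.+3%:R) + s * (P2 / k.+3%:R),
       ((1 - x) * v + x * u) * (zx + zx ^+ k.+2) <= P1 / k.+3%:R &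
       ((1 - y) * v + y * u) * (zy + zy ^+ k.+2) <= P2 / k.+3%:R] /\
   (u != v -> x != y -> 0 < s < 1 -> 
       ((1 - x) * v + x * u) * (zx + zx ^+ k.+2) < P1 / k.+3%:R).
  move=> x y s hx hy hs.
  set t := (1 - s) * x + s * y.
  have ht : 0 < t < 1 by exact: tin.
  have [zx zx0 ex] := zex x hx; have [zy zy0 ey] := zex y hy; have [zt zt0 et] := zex t ht.
  exists zx, zy, zt,
    (Phi R k.+2 ((1 - x) * u + x * v) ((1 - x) * v + x * u) zt),
    (Phi R k.+2 ((1 - y) * u + y * v) ((1 - y) * v + y * u) zt).
  have N0 : 0 < k.+3%:R :> R by [].
  have N3 : 3 + k%:R != 0 :> R by apply: lt0r_neq0; have := ler0n R k; lra.
  split; first split.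
  - exact: rE.
  - exact: rE.
  - rewrite (rE t zt) //.
    have E := @Phi_eq R k.+2 _ _ zt zt0 et.
    have -> : ((1 - t) * v + t * u) * (zt + zt ^+ k.+2) =
      Phi R k.+2 ((1 - t) * u + t * v) ((1 - t) * v + t * u) zt / k.+3%:R.
      by rewrite E; field; exact: N3.
    have -> : (1 - t) * u + t * v = (1 - s) * ((1 - x) * u + x * v) + s * ((1 - y) * u + y * v) by rewrite /t; ring.
    have -> : (1 - t) * v + t * u = (1 - s) * ((1 - x) * v + x * u) + s * ((1 - y) * v + y * u) by rewrite /t; ring.
    rewrite Phi_lin; field; exact: N3.
  - by rewrite ler_pdivlMr // mulrC mulrA; apply: Phi_ge => //; apply: bpos.
  - by rewrite ler_pdivlMr // mulrC mulrA; apply: Phi_ge => //; apply: bpos.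
  move=> uv xy /andP[s0 s1].
  rewrite ltr_pdivlMr // mulrC mulrA; apply: (@Phi_gt R k.+1) => //; first exact: bpos.
  apply/eqP => ztx; move: et; rewrite ztx => et.
  have : ((1 - t) * u + t * v) * ((1 - x) * v + x * u) - ((1 - x) * u + x * v) * ((1 - t) * v + t * u) = 0.
    by rewrite -et -ex; ring.
  have -> : ((1 - t) * u + t * v) * ((1 - x) * v + x * u) - ((1 - x) * u + x * v) * ((1 - t) * v + t * u)
     = (v - u) * (s * (y - x)) * (u + v) by rewrite /t; ring.
  apply/eqP; rewrite !mulf_neq0 //.
  - by rewrite subr_eq0 eq_sym.
  - by rewrite gt_eqF.
  - by rewrite subr_eq0 eq_sym.
  - by rewrite gt_eqF // addr_gt0.
split.
  move=> x y s hx hy hs.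
  have [zx [zy [zt [P1 [P2 [[-> -> -> h1 h2] _]]]]]] := core x y s hx hy hs.
  case/andP: hs => s0 s1.
  move: h1 h2; set G1 := _ * (zx + _); set G2 := _ * (zy + _).
  set q1 := P1 / _; set q2 := P2 / _ => h1 h2.
  nra.
move=> uv x y s hx hy xy /andP[s0 s1].
have hs' : 0 <= s <= 1 by rewrite !ltW.
have [zx [zy [zt [P1 [P2 [[-> -> -> h1 h2] h3]]]]]] := core x y s hx hy hs'.
have ltand : 0 < s < 1 by rewrite s0 s1.
have h4 := h3 uv xy ltand.
move: h1 h2 h4; set G1 := _ * (zx + _); set G2 := _ * (zy + _).
set q1 := P1 / _; set q2 := P2 / _ => h1 h2 h4.
nra.
Qed.
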